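(* Let $d\in\mathbb{Z}$ with $d>1$ and let $A\subseteq\mathbb{R}^2$ be finite and $d$-regular. Then \[ |\mathcal{N}_d(A,\emptyset,\mathbb{R}^2)|\geq\frac{1}{(2^{d+3})!}|A|^{\binom{d+2}{2}-3}. \]
   Context: For $k\in\mathbb{Z}^+$, a curve of degree $k$ is the zero set in $\mathbb{R}^2$ of a polynomial in $\mathbb{R}[x,y]$ of degree exactly $k$; $\mathcal{C}_k$ is the family of such curves and $\mathcal{C}_{\le k}:=\bigcup_{j=1}^k\mathcal{C}_j$. A finite set $A\subseteq\mathbb{R}^2$ is $d$-regular if $|A\cap C|<2^{-2^{3d+8}}|A|$ for all $C\in\mathcal{C}_{\le d}$. For $k\in\mathbb{Z}^+$ let $I_k=\{(i,j)\in\mathbb{Z}_{\ge 0}^2: 1\le i+j\le k\}$ and $\psi_k:\mathbb{R}^2\to\mathbb{R}^{\binom{k+2}{2}-1}$, $\psi_k(a_1,a_2)=(a_1^ia_2^j)_{(i,j)\in I_k}$; for $S\subseteq\mathbb{R}^N$, $\dim S$ is the dimension of its affine hull ($\dim\emptyset=-1$). $\mathcal{N}_d(A)$ is the family of $B\subseteq A$ with $|B|=\binom{d+2}{2}-3$ such that: (a) $\dim\psi_d(B)=\binom{d+2}{2}-4$; (b) for all $e\in\{1,\dots,d-1\}$ and $C\in\mathcal{C}_e$, $|B\cap C|<\binom{d+2}{2}-\binom{d-e+2}{2}$; (c) for all $e\in\{1,\dots,d-1\}$ and $C\in\mathcal{C}_e$ with $|B\cap C|=\binom{d+2}{2}-\binom{d-e+2}{2}-1$,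 $\dim\psi_{d-e}(B\setminus C)=\binom{d-e+2}{2}-3$; (d) for all $e\in\{1,\dots,d-1\}$ and $C\in\mathcal{C}_e$ with $|B\cap C|<\binom{d+2}{2}-\binom{d-e+2}{2}-1$, $\dim\psi_{d-e}(B\setminus C)>\binom{d-e+2}{2}-3$. For $B_0,C_0\subseteq\mathbb{R}^2$, $\mathcal{N}_d(A,B_0,C_0):=\{E\in\mathcal{N}_d(A): B_0\subseteq E\text{ and }E\cap C_0=E\setminus B_0\}$ (so $\mathcal{N}_d(A,\emptyset,\mathbb{R}^2)=\mathcal{N}_d(A)$). *)

(* Defs.v *)
From HB Require Import structures.
From mathcomp Require Import all_boot all_order all_algebra.
From mathcomp Require Import finmap.
From mathcomp Require Import mpoly.
From mathcomp Require Import boolp reals.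
Set Implicit Arguments. Unset Strict Implicit. Unset Printing Implicit Defensive.
Import Order.TTheory GRing.Theory Num.Theory.
Local Open Scope ring_scope.
Local Open Scope fset_scope.

Section Defs.
Variable R : realType.

Definition pt := (R * R)%type.

Definition peval (p : {mpoly R[2]}) (a : pt) : R :=
  p.@[fun i : 'I_2 => if val i == 0%N then a.1 else a.2].

(* p has total degree exactly k  (msize p = 1 + total degree) *)
Definition has_deg (p : {mpoly R[2]}) (k : nat) : Prop := msize p = k.+1.

Definition on_curve (S : {fset pt}) (p : {mpoly R[2]}) : {fset pt} :=
  [fset a in S | peval p a == 0].
Definition off_curve (S : {fset pt}) (p : {mpoly R[2]}) : {fset pt} :=
  [fset a in S | peval p a != 0].

Definition regular (d : nat) (A : {fset pt}) : Prop :=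
  forall (k : nat) (p : {mpoly R[2]}), (1 <= k <= d)%N -> has_deg p k ->
    (#|` on_curve A p |)%:R < ((2 ^+ (2 ^ (3 * d + 8))%N)^-1) * (#|` A|)%:R :> R.

Definition mons (k : nat) : seq (nat * nat) :=
  [seq ij <- [seq (i, j) | i <- iota 0 k.+1, j <- iota 0 k.+1]
     | (1 <= ij.1 + ij.2 <= k)%N].

Definition psi (k : nat) (a : pt) : 'rV[R]_(size (mons k)) :=
  \row_(t < size (mons k)) (a.1 ^+ (nth (0, 0) (mons k) t).1 *
                            a.2 ^+ (nth (0, 0) (mons k) t).2).

Definition affdim (n : nat) (s : seq 'rV[R]_n) : int :=
  if s is x :: _ then (\rank (\matrix_(i < size s) (s`_i - x)))%:Z else -1.

Definition dimpsi (k : nat) (S : {fset pt}) : int :=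
  affdim [seq psi k a | a <- enum_fset S].

Definition inN (d : nat) (A B : {fset pt}) : Prop :=
  B `<=` A /\ [/\
      #|` B| = ('C(d + 2, 2) - 3)%N,
      dimpsi d B = ('C(d + 2, 2))%:Z - 4,
      (forall (e : nat) (p : {mpoly R[2]}), (1 <= e <= d - 1)%N -> has_deg p e ->
         (#|` on_curve B p| < 'C(d + 2, 2) - 'C(d - e + 2, 2))%N),
      (forall (e : nat) (p : {mpoly R[2]}), (1 <= e <= d - 1)%N -> has_deg p e ->
         (#|` on_curve B p|)%:Z = ('C(d + 2, 2))%:Z - ('C(d - e + 2, 2))%:Z - 1 ->
         dimpsi (d - e) (off_curve B p) = ('C(d - e + 2, 2))%:Z - 3) &
      (forall (e : nat) (p : {mpoly R[2]}), (1 <= e <= d - 1)%N -> has_deg p e ->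
         (#|` on_curve B p|)%:Z < ('C(d + 2, 2))%:Z - ('C(d - e + 2, 2))%:Z - 1 ->
         ('C(d - e + 2, 2))%:Z - 3 < dimpsi (d - e) (off_curve B p))].

(* the (finite) family N_d(A) = N_d(A, ∅, R^2) *)
Definition Nd (d : nat) (A : {fset pt}) : {fset {fset pt}} :=
  [fset B in fpowerset A | `[< inN d A B >]].

End Defs.

(* Main.v *)
Require Import Defs.
From HB Require Import structures.
From mathcomp Require Import all_boot all_order all_algebra.
From mathcomp Require Import finmap mpoly boolp reals.
From mathcomp Require Import zify ring lra.
Import Order.TTheory GRing.Theory Num.Theory.
Local Open Scope ring_scope.
Local Open Scope fset_scope.
Set Implicit Arguments. Unset Strict Implicit. Unset Printing Implicit Defensive.
Lemma mem_mons k i j : ((i, j) \in mons k) = (1 <= i + j <= k)%N.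
Proof.
rewrite /mons mem_filter [X in X && _]/=.
case H: (1 <= i + j <= k)%N; rewrite ?andTb ?andFb //.
apply/allpairsP; exists (i, j); split; rewrite ?mem_iota //=; lia.
Qed.

Lemma uniq_mons k : uniq (mons k).
Proof.
rewrite /mons filter_uniq // allpairs_uniq ?iota_uniq //.
by move=> [a b] [c d] _ _ /=.
Qed.

Lemma count_inner k i : (i <= k)%N ->
  count (fun j => 1 <= i + j <= k)%N (iota 0 k.+1) = (if i is 0 then k else k.+1 - i)%N.
Proof.
move=> lik.
have -> : k.+1 = ((k - i).+1 + i)%N by lia.
rewrite iotaD count_cat.
have -> : count (fun j => 1 <= i + j <= k)%N (iota (0 + (k - i).+1) i) = 0%N.
  apply/eqP; rewrite -leqn0 leqNgt -has_count; apply/hasPn => j.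
  rewrite mem_iota => /andP [h1 h2]; apply/negP => /andP [_ h3]; lia.
rewrite addn0.
case: (posnP i) => [i0|ip].
  subst i; rewrite subn0 /= add0n.
  rewrite (eq_in_count (a2 := predT)) ?count_predT ?size_iota; first by [].
  move=> j; rewrite mem_iota => /andP [h1 h2]; apply/andP; split => /=; lia.
rewrite (eq_in_count (a2 := predT)) ?count_predT ?size_iota.
  move: ip; case: i lik => // i lik _; lia.
move=> j; rewrite mem_iota => /andP [h1 h2]; apply/andP; split => /=; lia.
Qed.

Lemma size_mons k : (size (mons k)).+1 = 'C(k.+2, 2).
Proof.
rewrite /mons size_filter -sum1_count big_mkcond.
rewrite (big_allpairs (F := fun ij => if (1 <= ij.1 + ij.2 <= k)%N then 1%N else 0%N)).
under eq_big_seq => i.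
  rewrite mem_iota add0n => /andP [_ ik].
  rewrite -big_mkcond sum1_count (@count_inner k i); last by lia.
  over.
rewrite /=.
have H : forall n, (n <= k.+1)%N ->
  ((\sum_(i <- iota 0 n) (if i is 0 then k else k.+1 - i)) + (if n is 0 then 0 else 1)
    = (\sum_(i <- iota 0 n) (k.+1 - i)))%N.
  elim => [|n IH] ln; first by rewrite /= !big_nil.
  rewrite -[n.+1]addn1 iotaD !big_cat /= !big_seq1 add0n.
  case: n IH ln => [|n] IH ln.
    rewrite /= !big_nil /=; lia.
  have := IH (ltnW ln); rewrite /=.
  lia.
have := H k.+1 (leqnn _); rewrite /= => E.
have S : forall n, (n <= k.+1)%N ->
  ((\sum_(i <- iota 0 n) (k.+1 - i)) + 'C(k.+1 - n, 2) + (k.+1 - n) = 'C(k.+2, 2))%N.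
  elim => [|n IH] ln.
    by rewrite /= big_nil subn0 add0n [in RHS]binS bin1.
  rewrite -[n.+1]addn1 iotaD big_cat /= big_seq1 add0n.
  rewrite -(IH (ltnW ln)).
  have -> : (k.+1 - n = (k.+1 - (n + 1)).+1)%N by lia.
  rewrite binS bin1.
  have -> : (k.+1 - (n + 1))%N = (k - n)%N by lia.
  lia.
have := S k.+1 (leqnn _); rewrite subnn bin0n addn0 addn0 /= => S2.
lia.
Qed.
Lemma bin2_double n : ('C(n, 2) * 2 = n * n.-1)%N.
Proof.
elim: n => [|n IH]; first by [].
rewrite binS bin1 mulnDl IH; case: n {IH} => [|n] //=; lia.
Qed.

Lemma bin_split a b :
  ('C(a + b + 2, 2) + 1 = 'C(a + 2, 2) + 'C(b + 2, 2) + a * b)%N.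
Proof.
have h1 := bin2_double (a + b + 2); have h2 := bin2_double (a + 2);
have h3 := bin2_double (b + 2).
rewrite !addn2 /= in h1 h2 h3 *. nia.
Qed.

Lemma small_sq d : ((d + 2) * (d + 1) <= 2 ^ (d + 3))%N.
Proof.
elim: d => [|d IH]; first by [].
have h : (d + 2 <= 2 ^ (d + 2))%N.
  by apply: ltnW; apply: ltn_expl.
rewrite !addSn expnS; have : (2 ^ (d + 3) = 2 * 2 ^ (d + 2))%N by rewrite -expnS addnS.
lia.
Qed.

Lemma n0_bound d : (('C(d + 2, 2) - 3) * 2 <= 2 ^ (d + 3))%N.
Proof.
have := bin2_double (d + 2); have := small_sq d.
rewrite addn2 /=. lia.
Qed.

Lemma big_bound d : (1 <= d)%N ->
  (4 * d * 2 ^ ('C(d + 2, 2) - 3) <= 2 ^ (2 ^ (3 * d + 8)))%N.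
Proof.
move=> d1.
set n0 := ('C(d + 2, 2) - 3)%N.
have hn0 : (n0 * 2 <= 2 ^ (d + 3))%N by exact: n0_bound.
have hd : (d < 2 ^ d)%N by rewrite ltn_expl.
have h1 : (4 * d * 2 ^ n0 <= 2 ^ (2 + d + n0))%N.
  rewrite !expnD; have -> : (2 ^ 2 = 4)%N by []. 
  apply: leq_mul; [apply: leq_mul => //; exact: ltnW|exact: leqnn].
apply: (leq_trans h1); rewrite leq_exp2l //.
have h2 : (2 + d <= 2 ^ (d + 2))%N.
  apply: ltnW; rewrite addnC ltn_expl //.
have h3 : (2 ^ (d + 3) <= 2 ^ (3 * d + 8))%N by rewrite leq_exp2l //; lia.
have h4 : (2 ^ (d + 3) = 2 * 2 ^ (d + 2))%N by rewrite -expnS addnS.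
lia.
Qed.

Lemma fact_double k : (2 ^ k * k`! <= (k * 2)`!)%N.
Proof.
elim: k => [|k IH]; first by [].
rewrite expnS factS mulSn addnC -addn2 addnC.
have -> : ((2 + k * 2)`! = (k * 2).+2 * (k * 2).+1 * (k * 2)`!)%N.
  by rewrite add2n !factS mulnA.
have : (2 * k.+1 <= (k * 2).+2 * (k * 2).+1)%N by nia.
move: IH; set F := (k * 2)`!; set G := k`!; set P := (2 ^ k)%N. nia.
Qed.
Section Main.
Variable R : realType.
Local Notation pt := (pt R).

Definition ne e := size (mons e).

Definition lift e (a : pt) : 'rV[R]_(1 + ne e) := row_mx (const_mx 1) (psi e a).

Definition LM e (s : seq pt) : 'M[R]_(size s, 1 + ne e) :=
  \matrix_(i < size s) lift e (nth (0, 0) s i).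

Definition rk e (S : {fset pt}) := \rank (LM e (enum_fset S)).
Definition indep e (S : {fset pt}) := rk e S == #|` S|.

Lemma row_LM e (s : seq pt) y : y \in s -> (lift e y <= LM e s)%MS.
Proof.
move=> ys; have lt : (index y s < size s)%N by rewrite index_mem.
have <- : row (Ordinal lt) (LM e s) = lift e y by rewrite rowK /= nth_index.
exact: row_sub.
Qed.

Lemma LM_sub e (s t : seq pt) : {subset s <= t} -> (LM e s <= LM e t)%MS.
Proof.
move=> st; apply/row_subP => i; rewrite rowK; apply: row_LM; apply: st.
exact: mem_nth.
Qed.

Lemma rk_sub e S T : S `<=` T -> (rk e S <= rk e T)%N.
Proof.
move/fsubsetP => ST; apply: mxrankS; apply: LM_sub => x; exact: ST.
Qed.

Lemma rk_le e S : (rk e S <= #|` S|)%N.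
Proof. exact: rank_leq_row. Qed.

Lemma disj_rank n m (w : 'rV[R]_n) (X : 'M[R]_(m, n)) (c : 'cV[R]_n) :
  X *m c = 0 -> w *m c != 0 -> \rank (w + X)%MS = (\rank X).+1.
Proof.
move=> Xc wc; rewrite mxrank_disjoint_sum ?rank_rV.
  have -> : w != 0 by apply: contra wc => /eqP ->; rewrite mul0mx.
  by [].
apply/eqP; rewrite -submx0; apply/row_subP => i; rewrite submx0.
set u := row i _.
have uw : (u <= w)%MS := submx_trans (row_sub i _) (capmxSl _ _).
have uX : (u <= X)%MS := submx_trans (row_sub i _) (capmxSr _ _).
case/sub_rVP: uw => a ua.
case/submxP: uX => D uD.
have : u *m c = 0 by rewrite uD -mulmxA Xc mulmx0.
rewrite ua -scalemxAl => /eqP; rewrite scalemx_eq0 (negbTE wc) orbF => /eqP a0.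
by rewrite a0 scale0r.
Qed.

Lemma notin_annih e S x (c : 'cV[R]_(1 + ne e)) :
  LM e (enum_fset S) *m c = 0 -> lift e x *m c != 0 -> x \notin S.
Proof.
move=> Sc xc; apply/negP => xS.
have /submxP [D hD] := row_LM e xS.
by move: xc; rewrite hD -mulmxA Sc mulmx0 eqxx.
Qed.

Lemma ext_indep e S x (c : 'cV[R]_(1 + ne e)) :
  indep e S -> LM e (enum_fset S) *m c = 0 -> lift e x *m c != 0 ->
  indep e (x |` S).
Proof.
move=> /eqP iS Sc xc.
have xS := notin_annih Sc xc.
rewrite /indep eqn_leq rk_le /= cardfsU1 xS add1n.
have := disj_rank Sc xc; rewrite /rk in iS; rewrite iS => <-.
apply: mxrankS; rewrite addsmx_sub; apply/andP; split.
  by apply: row_LM; rewrite fsetU11.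
apply: LM_sub => y yS; rewrite fset1Ur //.
Qed.

Lemma rank_annih m n (M : 'M[R]_(m, n)) (c : 'cV[R]_n) :
  M *m c = 0 -> c != 0 -> (\rank M < n)%N.
Proof.
move=> Mc c0.
have h : (c^T <= kermx M^T)%MS by apply/sub_kermxP; rewrite -trmx_mul Mc trmx0.
have := mxrankS h; rewrite mxrank_ker (mxrank_tr M) rank_rV trmx_eq0 c0.
have := rank_leq_col M. lia.
Qed.

Lemma annih e S : (#|` S| < 1 + ne e)%N ->
  exists c : 'cV[R]_(1 + ne e), c != 0 /\ LM e (enum_fset S) *m c = 0.
Proof.
move=> small.
set M := LM e (enum_fset S).
set K := kermx M^T.
have rK : (0 < \rank K)%N.
  rewrite /K mxrank_ker mxrank_tr.
  have h := rank_leq_row M; rewrite subn_gt0; exact: leq_ltn_trans h small.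
have KnZ : K != 0 by apply: contraTneq rK => ->; rewrite mxrank0.
have [i ri] : exists i, row i K != 0.
  apply/existsP; move: KnZ; apply: contraNT => /existsPn H.
  apply/eqP/row_matrixP => i; rewrite row0; apply/eqP.
  by have := H i; rewrite negbK.
exists (row i K)^T; split; first by rewrite trmx_eq0.
have : row i K *m M^T = 0 by rewrite -row_mul mulmx_ker row0.
by move=> h; rewrite -[M]trmxK -trmx_mul h trmx0.
Qed.

Lemma affdim_rank e (s : seq pt) : s != [::] ->
  affdim [seq psi e a | a <- s] = (\rank (LM e s))%:Z - 1.
Proof.
case: s => [//|x s'] _.
rewrite /affdim /=.
set l := psi e x :: [seq psi e a | a <- s'].
set P := \matrix_(i < size l) (l`_i - psi e x).
pose Z := row_mx (0 : 'M[R]_(size l, 1)) P.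
pose c0 := col_mx (const_mx 1 : 'M[R]_(1, 1)) (0 : 'M[R]_(ne e, 1)).
have Zc : Z *m c0 = 0 by rewrite /Z /c0 mul_row_col mul0mx mulmx0 addr0.
have wc : lift e x *m c0 != 0.
  rewrite /lift /c0 mul_row_col mulmx0 addr0.
  apply/eqP => /matrixP /(_ 0 0); rewrite !mxE big_ord1 !mxE mulr1 => /eqP.
  by rewrite oner_eq0.
have rowZ : forall j, row j Z = row_mx 0 (l`_j - psi e x).
  by move=> j; rewrite /Z row_row_mx row0 rowK.
have eqM : (LM e (x :: s') == lift e x + Z)%MS.
  apply/andP; split.
    apply/row_subP => i; rewrite rowK.
    set y := nth _ _ _.
    have yin : psi e y \in l by rewrite /l -map_cons map_f // mem_nth.
    have -> : lift e y = (lift e x + row_mx 0 (psi e y - psi e x))%R.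
      by rewrite /lift add_row_mx addr0 [(psi e x + _)%R]addrC subrK.
    apply: addmx_sub_adds; first exact: submx_refl.
    have lt : (index (psi e y) l < size l)%N by rewrite index_mem.
    have <- : row (Ordinal lt) Z = row_mx 0 (psi e y - psi e x).
      by rewrite rowZ /= nth_index.
    exact: row_sub.
  rewrite addsmx_sub; apply/andP; split; first by apply: row_LM; exact: mem_head.
  apply/row_subP => j; rewrite rowZ.
  have jlt : (j < size (x :: s'))%N by rewrite -(size_map (psi e)); exact: ltn_ord.
  have -> : l`_j = psi e (nth (0, 0) (x :: s') j) by exact: (@nth_map _ (0, 0) _ 0 (psi e) j (x :: s') jlt).
  set y := nth _ _ _.
  have -> : row_mx 0 (psi e y - psi e x) = (lift e y - lift e x)%R.
    by rewrite /lift opp_row_mx add_row_mx subrr.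
  apply: addmx_sub; first by apply: row_LM; exact: mem_nth.
  rewrite (eqmx_opp _); apply: row_LM; exact: mem_head.
rewrite (eqmx_rank eqM) (disj_rank Zc wc) /Z rank_row_0mx.
by set r := \rank P; rewrite -addn1 PoszD addrK.
Qed.

Lemma dimpsi_rk e S : S != fset0 -> dimpsi e S = (rk e S)%:Z - 1.
Proof.
move=> S0; rewrite /dimpsi affdim_rank //.
Qed.
Definition ex e : seq (nat * nat) := (0, 0)%N :: mons e.
Definition mono (ij : nat * nat) : 'X_{1..2} :=
  [multinom (if nat_of_ord i == 0%N then ij.1 else ij.2) | i < 2].

Lemma size_ex e : size (ex e) = (1 + ne e)%N.
Proof. by []. Qed.

Lemma uniq_ex e : uniq (ex e).
Proof. by rewrite /ex /= mem_mons /= uniq_mons. Qed.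

Lemma mem_ex e i j : ((i, j) \in ex e) = (i + j <= e)%N.
Proof.
rewrite /ex in_cons mem_mons.
case: i => [|i]; case: j => [|j] //=; lia.
Qed.

Lemma lift_entry e (a : pt) (t : 'I_(1 + ne e)) :
  lift e a 0 t = a.1 ^+ (nth (0, 0)%N (ex e) t).1 * a.2 ^+ (nth (0, 0)%N (ex e) t).2.
Proof.
rewrite /lift; case: (split_ordP t) => j ->.
  by rewrite row_mxEl mxE ord1 /= !expr0 mulr1.
by rewrite row_mxEr mxE /=.
Qed.

Lemma meval_mono (a : pt) ij :
  peval 'X_[mono ij] a = a.1 ^+ ij.1 * a.2 ^+ ij.2.
Proof.
by rewrite /peval mevalX big_ord_recl big_ord1 !mnmE /=.
Qed.

Lemma mdeg_mono ij : mdeg (mono ij) = (ij.1 + ij.2)%N.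
Proof. by rewrite mdegE big_ord_recl big_ord1 !mnmE /=. Qed.

Lemma mono_inj : injective mono.
Proof.
move=> [a b] [c d] /mnmP h.
have h0 := h ord0; have h1 := h ord_max.
rewrite !mnmE /= in h0 h1; by rewrite h0 h1.
Qed.

Lemma mono_of (m : 'X_{1..2}) : m = mono (m ord0, m ord_max).
Proof.
apply/mnmP => i; rewrite mnmE; case: i => [[|[|i]] Hi] //=.
- by congr (m _); apply: val_inj.
- by congr (m _); apply: val_inj.
Qed.

Definition poly_of e (c : 'cV[R]_(1 + ne e)) : {mpoly R[2]} :=
  \sum_(t < 1 + ne e) c t 0 *: 'X_[mono (nth (0, 0)%N (ex e) t)].

Lemma peval_poly_of e (c : 'cV[R]_(1 + ne e)) a :
  peval (poly_of c) a = (lift e a *m c) 0 0.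
Proof.
rewrite /peval /poly_of raddf_sum mxE; apply: eq_bigr => t _.
by rewrite /= mevalZ mevalX big_ord_recl big_ord1 !mnmE lift_entry /= mulrC.
Qed.

Lemma coef_poly_of e (c : 'cV[R]_(1 + ne e)) m :
  (poly_of c)@_m = \sum_(t < 1 + ne e) c t 0 * (mono (nth (0, 0)%N (ex e) t) == m)%:R.
Proof.
rewrite /poly_of raddf_sum; apply: eq_bigr => t _.
by rewrite /= mcoeffZ mcoeffX.
Qed.

Lemma ex_inj e (t t' : 'I_(1 + ne e)) :
  mono (nth (0, 0)%N (ex e) t) = mono (nth (0, 0)%N (ex e) t') -> t = t'.
Proof.
move/mono_inj => /eqP; rewrite nth_uniq ?uniq_ex ?size_ex //.
by move/eqP/val_inj.
Qed.

Lemma coef_poly_of_at e (c : 'cV[R]_(1 + ne e)) (t0 : 'I_(1 + ne e)) :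
  (poly_of c)@_(mono (nth (0, 0)%N (ex e) t0)) = c t0 0.
Proof.
rewrite coef_poly_of (bigD1 t0) //= eqxx mulr1 big1 ?addr0 //.
move=> t tt0; case: eqP => [/ex_inj h|_]; last by rewrite mulr0.
by rewrite h eqxx in tt0.
Qed.

Lemma poly_of_neq0 e (c : 'cV[R]_(1 + ne e)) : c != 0 -> poly_of c != 0.
Proof.
move=> c0.
have [t0 ct0] : exists t0, c t0 0 != 0.
  apply/existsP; move: c0; apply: contraNT => /existsPn H.
  apply/eqP/matrixP => i j; rewrite ord1 mxE; apply/eqP.
  by have := H i; rewrite negbK.
apply: contraNneq ct0 => h.
by rewrite -coef_poly_of_at h mcoeff0.
Qed.

Lemma msize_poly_of e (c : 'cV[R]_(1 + ne e)) : (msize (poly_of c) <= e.+1)%N.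
Proof.
apply: (leq_trans (msize_sum _ _ _)).
apply/bigmax_leqP => t _.
apply: (leq_trans (msizeZ_le _ _)); rewrite msizeX mdeg_mono ltnS.
have : nth (0, 0)%N (ex e) t \in ex e by rewrite mem_nth // size_ex.
by case: (nth _ _ _) => i j; rewrite mem_ex.
Qed.

Lemma poly_of_coefs e (p : {mpoly R[2]}) : (msize p <= e.+1)%N ->
  poly_of (\col_(t < 1 + ne e) p@_(mono (nth (0, 0)%N (ex e) t))) = p.
Proof.
move=> hp; apply/mpolyP => m; rewrite coef_poly_of.
case hm: ((m ord0, m ord_max) \in ex e).
  have lt : (index (m ord0, m ord_max) (ex e) < 1 + ne e)%N by rewrite -size_ex index_mem.
  set t0 := Ordinal lt.
  have et0 : mono (nth (0, 0)%N (ex e) t0) = m by rewrite nth_index // -mono_of.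
  rewrite (bigD1 t0) //= mxE et0 eqxx mulr1 big1 ?addr0 //.
  move=> t tt0; case: eqP => [h|_]; last by rewrite mulr0.
  by rewrite -et0 in h; move/ex_inj: h => h; rewrite h eqxx in tt0.
rewrite big1.
  apply/esym/eqP; rewrite mcoeff_eq0; apply: msize_mdeg_ge.
  apply: (leq_trans hp); rewrite [m]mono_of mdeg_mono /=.
  by move: hm; rewrite mem_ex => /negbT; rewrite -ltnNge.
move=> t _; case: eqP => [h|_]; last by rewrite mulr0.
have : nth (0, 0)%N (ex e) t \in ex e by rewrite mem_nth // size_ex.
by rewrite -[nth _ _ _]/(nth (0, 0)%N (ex e) t); move: h; rewrite [m]mono_of => /mono_inj ->; rewrite hm.
Qed.
Definition eps d : R := (2 ^+ (2 ^ (3 * d + 8))%N)^-1.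

Lemma eps_ge0 d : 0 <= eps d.
Proof. by rewrite /eps invr_ge0 exprn_ge0 // ler0n. Qed.

Lemma card_sep (B : {fset pt}) (P : pred pt) :
  #|` [fset a in B | P a]| = count P (enum_fset B).
Proof.
have -> : [fset a in B | P a] = [fset a in filter P (enum_fset B)].
  by apply/fsetP => y; rewrite !inE mem_filter andbC.
by rewrite card_fseq undup_id ?filter_uniq ?fset_uniq // size_filter.
Qed.

Lemma card_partition (B : {fset pt}) (p : {mpoly R[2]}) :
  (#|` on_curve B p| + #|` off_curve B p|)%N = #|` B|.
Proof.
rewrite /on_curve /off_curve !card_sep -(count_predC (fun a => peval p a == 0)).
by congr (_ + _)%N; apply: eq_count => a.
Qed.

Lemma curve_bound d (A : {fset pt}) (q : {mpoly R[2]}) : regular d A -> q != 0 ->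
  (msize q <= d.+1)%N -> (#|` on_curve A q|)%:R <= eps d * (#|` A|)%:R.
Proof.
move=> reg q0 qd.
case E: (msize q) => [|[|k]].
- by move/eqP: E; rewrite msize_poly_eq0 (negbTE q0).
- have hq : q = (q@_0)%:MP by apply: msize1_polyC; rewrite E.
  have c0 : q@_0 != 0 by apply: contra q0 => /eqP h; rewrite hq h.
  rewrite /on_curve card_sep.
  have -> : count (fun a => peval q a == 0) (enum_fset A) = 0%N.
    apply/eqP; rewrite -leqn0 leqNgt -has_count; apply/hasPn => a _.
    by rewrite /peval hq mevalC.
  by rewrite mulr_ge0 ?eps_ge0 ?ler0n.
- apply: ltW; apply: (reg k.+1) => //.
  by rewrite E in qd; apply/andP; split.
Qed.

Lemma A_large d (A : {fset pt}) : regular d A -> (1 <= d)%N -> 1 < eps d * (#|` A|)%:R.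
Proof.
move=> reg d1.
have hX : has_deg ('X_ord0 : {mpoly R[2]}) 1.
  by rewrite /has_deg msizeX mdeg1.
have h1d : (1 <= 1 <= d)%N by rewrite leqnn d1.
have [a aA] : exists a, a \in A.
  case: (fset_0Vmem A) => [A0|[x xA]]; last by exists x.
  have := reg 1%N _ h1d hX; rewrite A0 cardfs0 mulr0.
  by rewrite ltNge ler0n.
pose p : {mpoly R[2]} := 'X_ord0 - (a.1)%:MP.
have hp : has_deg p 1.
  rewrite /has_deg; apply/eqP; rewrite eqn_leq; apply/andP; split.
    apply: (leq_trans (msizeD_le _ _)); rewrite msizeN msizeC msizeX mdeg1.
    by case: (a.1 != 0).
  have : (U_(ord0))%MM \in msupp p.
    have U0 : ((U_(ord0))%MM == 0%MM :> 'X_{1..2}) = false by rewrite -mdeg_eq0 mdeg1.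
    by rewrite -[_ \in _]negbK -mcoeff_eq0 /p mcoeffB mcoeffXU mcoeffC eqxx U0 mulr0 subr0 oner_eq0.
  by move/msize_mdeg_lt; rewrite mdeg1.
have := reg 1%N p h1d hp.
apply: le_lt_trans; rewrite ler1n /on_curve card_sep -has_count.
apply/hasP; exists a => //.
by rewrite /peval mevalB mevalXU mevalC /= subrr.
Qed.
Definition gen d (B : {fset pt}) : Prop :=
  forall e, (1 <= e <= d)%N -> forall S, S `<=` B -> (#|` S| <= 1 + ne e)%N -> indep e S.

Lemma Kne e : (1 + ne e)%N = 'C(e + 2, 2).
Proof. by rewrite add1n /ne size_mons addn2. Qed.

Lemma sub_of_size (T : {fset pt}) k : (k <= #|` T|)%N ->
  exists S, S `<=` T /\ #|` S| = k.
Proof.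
move=> kT; exists [fset x in take k (enum_fset T)]; split.
  by apply/fsubsetP => y; rewrite inE; apply: mem_take.
rewrite card_fseq undup_id ?take_uniq ?fset_uniq // size_take.
by case: ltngtP kT => // ->.
Qed.

Lemma poly_of0 e : poly_of (0 : 'cV[R]_(1 + ne e)) = 0.
Proof. by rewrite /poly_of big1 // => t _; rewrite mxE scale0r. Qed.

Lemma LM_annih e (S : {fset pt}) (c : 'cV[R]_(1 + ne e)) :
  (forall y, y \in S -> peval (poly_of c) y = 0) -> LM e (enum_fset S) *m c = 0.
Proof.
move=> h; apply/row_matrixP => i; rewrite row_mul rowK row0.
rewrite [lift e _ *m c]mx11_scalar -peval_poly_of h ?raddf0 //.
exact: mem_nth.
Qed.

Lemma inN_of_gen d (A B : {fset pt}) : (1 < d)%N -> B `<=` A ->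
  #|` B| = ('C(d + 2, 2) - 3)%N -> gen d B -> inN d A B.
Proof.
move=> d2 BA cB gB.
have N6 : (6 <= 'C(d + 2, 2))%N.
  by have := leq_bin2l 2 (_ : (4 <= d + 2)%N); apply; lia.
have Kb3 : forall b, (1 <= b)%N -> (3 <= 'C(b + 2, 2))%N.
  by move=> b b1; have := leq_bin2l 2 (_ : (3 <= b + 2)%N); apply; lia.
have Bne : B != fset0 by rewrite -cardfs_gt0 cB; lia.
split => //; split => //.
- rewrite dimpsi_rk //.
  have /eqP -> : indep d B.
    apply: gB => //; first by lia.
    by rewrite Kne cB; lia.
  rewrite cB; lia.
- move=> e p /andP [e1 ed] hp.
  set b := (d - e)%N.
  have bs := bin_split e b; have eb : (e + b = d)%N by rewrite /b; lia.
  rewrite eb in bs.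
  rewrite ltnNge; apply/negP => hT.
  have ebp : (1 <= e * b)%N by rewrite muln_gt0; apply/andP; split; lia.
  have hk : (1 + ne e <= #|` on_curve B p|)%N by rewrite Kne; lia.
  have [S [ST cS]] := sub_of_size hk.
  have SB : S `<=` B.
    apply: (fsubset_trans ST); apply/fsubsetP => y; rewrite inE; by case/andP.
  have iS : indep e S by apply: gB => //; [lia | rewrite cS].
  have p0 : p != 0 by rewrite -msize_poly_eq0 hp.
  set c := \col_(t < 1 + ne e) p@_(mono (nth (0, 0)%N (ex e) t)).
  have pc : poly_of c = p by apply: poly_of_coefs; rewrite hp.
  have c0 : c != 0 by apply: contra p0 => /eqP c0; rewrite -pc c0 poly_of0.
  have Sc : LM e (enum_fset S) *m c = 0.
    apply: LM_annih => y /(fsubsetP ST); rewrite inE pc => /andP [_ /eqP]; done.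
  have := rank_annih Sc c0; move/eqP: iS; rewrite /rk => ->; rewrite cS ltnn.
  done.
- move=> e p /andP [e1 ed] hp hT.
  set b := (d - e)%N.
  set U := off_curve B p.
  rewrite -/b in hT.
  have UB : U `<=` B by apply/fsubsetP => y; rewrite inE; case/andP.
  have cU := card_partition B p; rewrite -/U in cU.
  have b1 : (1 <= b)%N by rewrite /b; lia.
  have K3 := Kb3 b b1.
  have cU' : (#|` U| = 'C(b + 2, 2) - 2)%N.
    have bs := bin_split e b; have eb : (e + b = d)%N by rewrite /b; lia.
    rewrite eb in bs. lia.
  have iU : indep b U.
    apply: gB => //; first by lia.
    by rewrite Kne cU'; lia.
  have Une : U != fset0 by rewrite -cardfs_gt0 cU'; lia.
  rewrite dimpsi_rk // (eqP iU) cU'. lia.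
- move=> e p /andP [e1 ed] hp hT.
  set b := (d - e)%N.
  set U := off_curve B p.
  rewrite -/b in hT.
  have UB : U `<=` B by apply/fsubsetP => y; rewrite inE; case/andP.
  have cU := card_partition B p; rewrite -/U in cU.
  have b1 : (1 <= b)%N by rewrite /b; lia.
  have K3 := Kb3 b b1.
  have cU' : ('C(b + 2, 2) - 1 <= #|` U|)%N.
    have bs := bin_split e b; have eb : (e + b = d)%N by rewrite /b; lia.
    rewrite eb in bs. lia.
  have [S [SU cS]] := sub_of_size cU'.
  have iS : indep b S.
    apply: gB; first by lia.
      exact: fsubset_trans SU UB.
    by rewrite Kne cS; lia.
  have Une : U != fset0 by rewrite -cardfs_gt0; lia.
  rewrite dimpsi_rk //.
  have := rk_sub b SU; rewrite (eqP iS) cS.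
  lia.
Qed.
Definition Gm d (A : {fset pt}) m : {fset {fset pt}} :=
  [fset B in fpowerset A | (#|` B| == m) && `[< gen d B >]].

Lemma mem_Gm d A m B :
  (B \in Gm d A m) <-> [/\ B `<=` A, #|` B| = m & gen d B].
Proof.
have -> : (B \in Gm d A m) = [&& B `<=` A, #|` B| == m & `[< gen d B >]].
  by rewrite /Gm !inE /= -fpowersetE.
split.
  by case/andP => -> /andP [/eqP -> /asboolP].
by case=> -> -> g; rewrite eqxx /=; apply/asboolP.
Qed.

Lemma sum_count (T : Type) (s : seq T) (a : pred T) :
  (\sum_(i <- s) (a i : nat))%N = count a s.
Proof. by rewrite -sumn_count sumnE big_map. Qed.

Lemma sum_mem_sub (A B : {fset pt}) : B `<=` A ->
  (\sum_(x <- enum_fset A) (x \in B : nat))%N = #|` B|.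
Proof.
move=> BA; rewrite (sum_count (enum_fset A) (fun x => x \in B)) -card_sep.
congr (size (enum_fset _)); apply/fsetP => y; rewrite !inE andbC.
by case yB: (y \in B) => //=; rewrite (fsubsetP BA).
Qed.

Lemma sum_eq_count (T : choiceType) (G : {fset T}) (Y : T) :
  (\sum_(B <- enum_fset G) (B == Y : nat))%N = (Y \in G).
Proof.
rewrite (sum_count (enum_fset G) (fun B => B == Y)).
rewrite -(count_uniq_mem Y (fset_uniq G)); apply: eq_count => B.
by rewrite /= eq_sym.
Qed.

Definition goodc d (A : {fset pt}) m (B : {fset pt}) (x : pt) : bool :=
  (x \notin B) && (x |` B \in Gm d A m.+1).

Definition extc d A m B : nat := (\sum_(x <- enum_fset A) goodc d A m B x)%N.

Lemma double_count d A m :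
  (\sum_(B <- enum_fset (Gm d A m)) extc d A m B <= m.+1 * #|` Gm d A m.+1|)%N.
Proof.
set G := Gm d A m; set G' := Gm d A m.+1.
have step1 : forall B x, (goodc d A m B x : nat) =
    (\sum_(B' <- enum_fset G') ((x \notin B) && (B' == x |` B)) : nat)%N.
  move=> B x; rewrite /goodc; case: (x \notin B) => /=.
    by rewrite sum_eq_count.
  by rewrite big1.
rewrite /extc.
under eq_bigr => B _ do under eq_bigr => x _ do rewrite step1.
under eq_bigr => B _ do rewrite exchange_big.
rewrite exchange_big /=.
under eq_bigr => B' _ do rewrite exchange_big.
rewrite /=.
have -> : (m.+1 * #|` G'| = \sum_(B' <- enum_fset G') m.+1)%N.
  by rewrite card_fset_sum1 big_distrr /=; apply: eq_bigr => ? _; rewrite muln1.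
rewrite big_seq [X in (_ <= X)%N]big_seq; apply: leq_sum => B' B'G.
have [B'A cB' _] := (mem_Gm d A m.+1 B').1 B'G.
rewrite -cB' -(sum_mem_sub B'A); apply: leq_sum => x _.
case xB': (x \in B').
  apply: (leq_trans (_ : _ <= \sum_(B <- enum_fset G) (B == B' `\ x : nat))%N).
    apply: leq_sum => B _; case: (x \notin B) / boolP => //= xB.
    by case: eqP => // ->; rewrite fsetU1K // eqxx.
  by rewrite (sum_eq_count G (B' `\ x)); case: (_ \in _).
rewrite big1 // => B _; case: (x \notin B) => //=.
by case: eqP => // h; move: xB'; rewrite h fsetU11.
Qed.

Definition badp e (S : {fset pt}) (x : pt) : bool :=
  (#|` S| < 1 + ne e)%N && ~~ indep e (x |` S).

Lemma gen_ext d (B : {fset pt}) x : gen d B -> x \notin B ->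
  (forall e, e \in iota 1 d -> forall S, S \in fpowerset B -> ~~ badp e S x) ->
  gen d (x |` B).
Proof.
move=> gB xB nb e ed S' S'sub cS'.
case xS': (x \in S').
  set S := S' `\ x.
  have SB : S `<=` B.
    apply/fsubsetP => y; rewrite in_fsetD1 => /andP [yx yS'].
    by move: (fsubsetP S'sub y yS'); rewrite in_fset1U (negbTE yx).
  have cS : #|` S'| = (#|` S|).+1 by rewrite (cardfsD1 x S') xS'.
  have := nb e _ S _; rewrite /badp -/S.
  rewrite (_ : (#|` S| < 1 + ne e)%N); last by rewrite -cS.
  rewrite fsetD1K // => h; apply: negbNE; apply: h.
    by rewrite mem_iota; lia.
  by rewrite fpowersetE.
apply: gB => //; apply/fsubsetP => y yS'.
have := fsubsetP S'sub y yS'; rewrite in_fset1U => /orP [/eqP yx|//].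
by rewrite yx xS' in yS'.
Qed.

Lemma bad_bound d (A B : {fset pt}) e S : regular d A -> gen d B ->
  e \in iota 1 d -> S \in fpowerset B ->
  (#|` [fset x in A | badp e S x]|)%:R <= eps d * (#|` A|)%:R.
Proof.
move=> reg gB ed SB; rewrite mem_iota in ed; rewrite fpowersetE in SB.
case hS: (#|` S| < 1 + ne e)%N; last first.
  rewrite card_sep (_ : count _ _ = 0%N) ?mulr_ge0 ?eps_ge0 ?ler0n //.
  apply/eqP; rewrite -leqn0 leqNgt -has_count; apply/hasPn => x _.
  by rewrite /badp hS.
have iS : indep e S by apply: gB; [lia | exact: SB | exact: ltnW hS].
have [c [c0 Sc]] := annih hS.
set q := poly_of c.
have sub : [fset x in A | badp e S x] `<=` on_curve A q.
  apply/fsubsetP => x; rewrite !inE => /andP [xA]; rewrite xA /= /badp hS /=.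
  apply: contraNT => qx; apply: (ext_indep iS Sc).
  apply: contra qx => /eqP h; rewrite peval_poly_of h mxE.
  done.
apply: le_trans (curve_bound reg (poly_of_neq0 c0) _).
  by rewrite ler_nat fsubset_leq_card.
apply: (leq_trans (msize_poly_of c)); lia.
Qed.
Lemma sumr_const_seq (T : Type) (s : seq T) (c : R) :
  \sum_(i <- s) c = (size s)%:R * c.
Proof.
elim: s => [|x s IH]; first by rewrite big_nil mul0r.
by rewrite big_cons IH /= -add1n natrD mulrDl mul1r.
Qed.

Lemma ext_count d (A : {fset pt}) m B : regular d A -> B \in Gm d A m ->
  (#|` A|)%:R <= ((extc d A m B)%:R + m%:R + (d * 2 ^ m)%:R * (eps d * (#|` A|)%:R))%R.
Proof.
move=> reg HB; have [BA cB gB] := (mem_Gm d A m B).1 HB.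
have ptw : forall x, x \in enum_fset A -> (1 <= goodc d A m B x + (x \in B) +
    \sum_(e <- iota 1 d) \sum_(S <- enum_fset (fpowerset B)) badp e S x)%N.
  move=> x xA; case xB: (x \in B).
    by apply: (leq_trans _ (leq_addr _ _)); apply: (leq_trans _ (leq_addl _ _)).
  case: (posnP (\sum_(e <- iota 1 d) \sum_(S <- enum_fset (fpowerset B)) badp e S x)%N) => [H0|H]; last by apply: (leq_trans H (leq_addl _ _)).
  have nb : forall e, e \in iota 1 d -> forall S, S \in fpowerset B -> ~~ badp e S x.
    move=> e ed S SB; move/eqP: H0; rewrite sum_nat_seq_eq0 => /allP /(_ e ed) /=.
    rewrite sum_nat_seq_eq0 => /allP /(_ S SB) /=.
    by case: (badp e S x).
  have gx : goodc d A m B x.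
    rewrite /goodc xB /=; apply/(mem_Gm d A m.+1 _); split.
    - by rewrite fsubUset fsub1set xA BA.
    - by rewrite cardfsU1 xB cB.
    - by apply: gen_ext => //; rewrite xB.
  by rewrite gx.
have hnat : (#|` A| <= extc d A m B + #|` B| +
    \sum_(e <- iota 1 d) \sum_(S <- enum_fset (fpowerset B)) #|` [fset x in A | badp e S x]|)%N.
  rewrite card_fset_sum1 /extc -(sum_mem_sub BA).
  have -> : (\sum_(e <- iota 1 d) \sum_(S <- enum_fset (fpowerset B)) #|` [fset x in A | badp e S x]|
      = \sum_(x <- enum_fset A) \sum_(e <- iota 1 d) \sum_(S <- enum_fset (fpowerset B)) badp e S x)%N.
    under eq_bigr => e _ do under eq_bigr => S _ do rewrite card_sep -sum_count.
    under eq_bigr => e _ do rewrite exchange_big.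
    by rewrite exchange_big.
  rewrite -!big_split /= big_seq [X in (_ <= X)%N]big_seq; apply: leq_sum => x xA.
  exact: ptw.
apply: le_trans (_ : ((extc d A m B + #|` B| +
    \sum_(e <- iota 1 d) \sum_(S <- enum_fset (fpowerset B)) #|` [fset x in A | badp e S x]|)%N)%:R <= _).
  by rewrite ler_nat.
rewrite !natrD cB lerD2l natr_sum.
apply: le_trans (_ : \sum_(e <- iota 1 d) \sum_(S <- enum_fset (fpowerset B)) (eps d * (#|` A|)%:R) <= _).
  rewrite big_seq [X in (_ <= X)]big_seq; apply: ler_sum => e ed.
  rewrite natr_sum big_seq [X in (_ <= X)]big_seq; apply: ler_sum => S SB.
  exact: bad_bound reg gB ed SB.
rewrite (sumr_const_seq (iota 1 d)) (sumr_const_seq (enum_fset (fpowerset B))) size_iota card_fpowerset cB.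
by rewrite mulrA -natrM.
Qed.

Lemma gen0 d : gen d fset0.
Proof.
move=> e _ S; rewrite fsubset0 => /eqP -> _.
rewrite /indep /rk; have := rank_leq_row (LM e (enum_fset (@fset0 pt))).
by set r := \rank _; rewrite cardfs0 leqn0.
Qed.

End Main.
Lemma Nd_mem (R : realType) d (A B : {fset pt R}) :
  (B \in Nd d A) = (B `<=` A) && `[< inN d A B >].
Proof. by rewrite /Nd !inE /= -fpowersetE. Qed.

Lemma final_ineq (R : realType) (a : R) n0 F : 0 <= a ->
  (2 ^ n0 * n0`! <= F)%N ->
  a ^+ n0 / (F%:R) <= (a / 2) ^+ n0 / (n0`!)%:R.
Proof.
move=> a0 hF.
have F0 : (0 < F)%N by apply: leq_trans hF; rewrite muln_gt0 expn_gt0 fact_gt0.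
rewrite expr_div_n -mulrA -invfM; apply: ler_wpM2l; first exact: exprn_ge0.
rewrite lef_pV2 ?posrE ?mulr_gt0 ?exprn_gt0 ?ltr0n ?fact_gt0 //.
by rewrite -natrX -natrM ler_nat.
Qed.

Unset Implicit Arguments.

Theorem lemma24 (R : realType) (d : nat) (A : {fset pt R}) :
  (1 < d)%N -> regular d A ->
  (#|` A|)%:R ^+ ('C(d + 2, 2) - 3) / ((2 ^ (d + 3))`!)%:R
    <= (#|` Nd d A|)%:R :> R.
Proof.
move=> d2 reg.
set n0 := ('C(d + 2, 2) - 3)%N.
set a : R := (#|` A|)%:R.
have d1 : (1 <= d)%N by lia.
have a0 : 0 <= a by rewrite ler0n.
have Al := A_large reg d1.
have bb := big_bound d1; rewrite -/n0 in bb.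
set T := (2 ^ (3 * d + 8))%N in bb Al.
set P : R := 2 ^+ T.
have P0 : 0 < P by rewrite exprn_gt0.
have eP : eps R d = P^-1 by [].
have aP : P < a by move: Al; rewrite eP mulrC ltr_pdivlMr // mul1r.
have n0d : (n0 <= d * 2 ^ n0)%N.
  apply: (leq_trans (ltnW (ltn_expl n0 (isT : (1 < 2)%N)))); apply: leq_pmull; lia.
have extb : forall m B, (m < n0)%N -> B \in Gm d A m -> a / 2 <= (extc d A m B)%:R.
  move=> m B mn HB.
  have h := ext_count reg HB; rewrite -/a in h.
  have hm : 4 * m%:R <= P.
    rewrite /P -natrX -(natrM R 4 m) ler_nat; apply: leq_trans bb.
    rewrite -mulnA leq_mul2l /=; apply: leq_trans n0d; exact: ltnW.
  have hu : 4 * (d * 2 ^ m)%:R <= P.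
    rewrite /P -natrX -natrM ler_nat; apply: leq_trans bb.
    rewrite mulnA leq_mul2l /= leq_pexp2l //; first by rewrite orbT.
    exact: ltnW.
  set u := ((d * 2 ^ m)%N)%:R in h hu.
  have uE : u * eps R d <= 1 / 4.
    have : 0 <= (P - 4 * u) * eps R d by rewrite mulr_ge0 ?subr_ge0 ?eps_ge0.
    rewrite mulrBl eP mulfV ?gt_eqF //.
    rewrite -mulrA; set w := u * P^-1. lra.
  have : u * (eps R d * a) <= a / 4.
    rewrite mulrA.
    have : 0 <= (1 / 4 - u * eps R d) * a by rewrite mulr_ge0 // subr_ge0.
    rewrite mulrBl; lra.
  move=> h2.
  have : m%:R <= a / 4 by lra.
  lra.
have main : forall m, (m <= n0)%N ->
    (a / 2) ^+ m / (m`!)%:R <= (#|` Gm d A m|)%:R.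
  elim => [|m IH] hm.
    rewrite expr0 fact0 divr1 ler1n cardfs_gt0.
    apply/negP => /eqP G0.
    have : (@fset0 (pt R)) \in Gm d A 0 by apply/mem_Gm; split; [exact: fsub0set | exact: cardfs0 | exact: gen0].
    by rewrite G0 inE.
  have IH' := IH (ltnW hm).
  have dc := double_count d A m.
  have S1 : (#|` Gm d A m|)%:R * (a / 2) <= (m.+1)%:R * (#|` Gm d A m.+1|)%:R.
    apply: le_trans (_ : (\sum_(B <- enum_fset (Gm d A m)) extc d A m B)%:R <= _); last first.
      by rewrite -natrM ler_nat.
    rewrite -sumr_const_seq natr_sum big_seq [X in (_ <= X)]big_seq.
    by apply: ler_sum => B HB; apply: extb.
  rewrite factS natrM exprS.
  have m0 : 0 < (m.+1)%:R :> R by rewrite ltr0n.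
  have f0 : 0 < (m`!)%:R :> R by rewrite ltr0n fact_gt0.
  rewrite invfM.
  have -> : a / 2 * (a / 2) ^+ m * ((m.+1)%:R^-1 * (m`!)%:R^-1)
      = ((a / 2) ^+ m / (m`!)%:R) * (a / 2) / (m.+1)%:R.
    by field; rewrite nat1r !gt_eqF // ltr0n fact_gt0.
  rewrite ler_pdivrMr //.
  rewrite [X in _ <= X]mulrC; apply: le_trans S1.
  by apply: ler_wpM2r => //; lra.
have GN : Gm d A n0 `<=` Nd d A.
  apply/fsubsetP => B HB; have [BA cB gB] := (mem_Gm d A n0 B).1 HB.
  by rewrite Nd_mem BA /=; apply/asboolP; apply: inN_of_gen.
apply: le_trans (final_ineq a0 _) _.
  apply: leq_trans (fact_double n0) _; apply: leq_fact; exact: n0_bound.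
apply: le_trans (main n0 (leqnn _)) _.
by rewrite ler_nat fsubset_leq_card.
Qed.
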